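(* Let $\mathbb{K}$ be a field of characteristic zero and let $\mathcal{D}=\{\Delta^{p(1)}_{\beta(1)},\ldots,\Delta^{p(k)}_{\beta(k)}\}$ be a finite set of derivations of $\mathbb{K}[x_1,\ldots,x_n]$ with $p(i)\in\mathbb{Z}^n_{\ge0}\setminus\{0\}$ (positive weight) and $\beta(i)\in\mathbb{K}^n\setminus\{0\}$. Let $\Gamma(\mathcal{D})$ be the directed graph with vertices $1,\ldots,k$ in which there is an edge from $i$ to $j$ if and only if $\beta(i)$ and $\beta(j)$ are not proportional and $\langle\beta(i),p(j)\rangle\neq0$. If the Lie algebra $\mathfrak{g}(\mathcal{D})$ generated by $\mathcal{D}$ is finite dimensional, then $\Gamma(\mathcal{D})$ contains no oriented cycles.
   Context: For $p\in\mathbb{Z}^n_{\ge0}$ and $\beta\in\mathbb{K}^n$, $\Delta^p_\beta:=x_1^{p_1}\cdots x_n^{p_n}\sum_{j=1}^n\beta_jx_j\partial_j$, where $\partial_j=\partial/\partial x_j$; its weight is $\sum_jp_j$. $\langle\beta,u\rangle:=\sum_i\beta_iu_i$. The Lie bracket is the commutator of derivations. *)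

(* Defs.v *)
From HB Require Import structures.
From mathcomp Require Import all_boot all_order all_algebra.
From mathcomp Require Import mpoly.
Set Implicit Arguments. Unset Strict Implicit. Unset Printing Implicit Defensive.
Import Order.TTheory GRing.Theory Num.Theory.
Local Open Scope ring_scope.

Section Defs.
Variables (K : fieldType) (n : nat).

Definition op := {mpoly K[n]} -> {mpoly K[n]}.

Definition Delta (p : 'X_{1..n}) (beta : 'rV[K]_n) : op :=
  fun f => 'X_[p] * \sum_(j < n) beta 0 j *: ('X_j * mderiv j f).

Definition lie_bracket (D1 D2 : op) : op := fun f => D1 (D2 f) - D2 (D1 f).

Inductive in_lie_gen (k : nat) (D : 'I_k -> op) : op -> Prop :=
  | lie_gen i : in_lie_gen D (D i)
  | lie_zero : in_lie_gen D (fun _ => 0)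
  | lie_add A B : in_lie_gen D A -> in_lie_gen D B -> in_lie_gen D (fun f => A f + B f)
  | lie_scale (c : K) A : in_lie_gen D A -> in_lie_gen D (fun f => c *: A f)
  | lie_br A B : in_lie_gen D A -> in_lie_gen D B -> in_lie_gen D (lie_bracket A B).

Definition lie_gen_fin_dim (k : nat) (D : 'I_k -> op) : Prop :=
  exists s : seq op, forall A, in_lie_gen D A ->
    exists c : 'I_(size s) -> K,
      forall f, A f = \sum_(i < size s) c i *: (nth (fun g => g) s i) f.

Definition proportional (b1 b2 : 'rV[K]_n) : Prop := exists c : K, b1 = c *: b2.

Definition pairing (b : 'rV[K]_n) (p : 'X_{1..n}) : K :=
  \sum_(l < n) b 0 l * (p l)%:R.

Definition Gamma_edge (k : nat) (p : 'I_k -> 'X_{1..n}) (beta : 'I_k -> 'rV[K]_n)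
  (i j : 'I_k) : Prop :=
  ~ proportional (beta i) (beta j) /\ pairing (beta i) (p j) <> 0.

(* Gamma(D) contains an oriented cycle: vertices i0, c_0, ..., c_(m-1) = i0
   with m >= 1 and an edge between each consecutive pair. *)
Definition has_oriented_cycle (k : nat) (p : 'I_k -> 'X_{1..n})
  (beta : 'I_k -> 'rV[K]_n) : Prop :=
  exists (i0 : 'I_k) (c : seq 'I_k),
    [/\ c != [::], last i0 c = i0 &
        forall t, (t < size c)%N ->
          Gamma_edge p beta (nth i0 (i0 :: c) t) (nth i0 c t)].

End Defs.

(* Main.v *)
Require Import Defs.
From HB Require Import structures.
From mathcomp Require Import all_boot all_order all_algebra.
From mathcomp Require Import mpoly.
From mathcomp Require Import ring zify.
Import GRing.Theory.
Local Open Scope ring_scope.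
Set Implicit Arguments. Unset Strict Implicit. Unset Printing Implicit Defensive.

Section Calc.
Variables (K : fieldType) (n : nat).
Implicit Types (b g : 'rV[K]_n) (f : {mpoly K[n]}) (p q m : 'X_{1..n}).

Definition E b f : {mpoly K[n]} := \sum_(j < n) b 0 j *: ('X_j * mderiv j f).

Lemma DeltaE p b f : Delta p b f = 'X_[p] * E b f.
Proof. by []. Qed.

Lemma E_D b : {morph E b : x y / x + y}.
Proof.
move=> x y; rewrite /E -big_split /=; apply: eq_bigr => j _.
by rewrite mderivD mulrDr scalerDr.
Qed.

Lemma E_0 b : E b 0 = 0.
Proof. by rewrite /E big1 // => j _; rewrite mderiv0 mulr0 scaler0. Qed.

Lemma E_Z b c f : E b (c *: f) = c *: E b f.
Proof.
rewrite /E scaler_sumr; apply: eq_bigr => j _.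
by rewrite mderivZ -scalerAr !scalerA mulrC.
Qed.

Lemma E_M b f h : E b (f * h) = E b f * h + f * E b h.
Proof.
rewrite /E mulr_suml mulr_sumr -big_split /=; apply: eq_bigr => j _.
rewrite mderivM mulrDr scalerDr -scalerAl -scalerAr; congr (_ *: _ + _ *: _).
  by rewrite mulrA.
by rewrite mulrCA.
Qed.

Definition pairingE b m : pairing b m = \sum_(l < n) b 0 l * (m l)%:R := erefl.

Lemma pairingD b p q : pairing b (p + q)%MM = pairing b p + pairing b q.
Proof.
rewrite /pairing -big_split /=; apply: eq_bigr => l _.
by rewrite mnmDE natrD mulrDr.
Qed.

Lemma pairing_lin (x y : K) b g m :
  pairing (x *: b + y *: g) m = x * pairing b m + y * pairing g m.
Proof.
rewrite /pairing !mulr_sumr -big_split /=; apply: eq_bigr => l _.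
by rewrite !mxE mulrDl !mulrA.
Qed.

Lemma E_X b m : E b 'X_[m] = pairing b m *: 'X_[m].
Proof.
rewrite /E /pairing scaler_suml; apply: eq_bigr => j _.
rewrite mderivX -scalerAr -scalerA.
case: (posnP (m j)) => [->|hj]; first by rewrite !scale0r !scaler0.
congr (_ *: (_ *: _)).
rewrite -mpolyXD addmC submK //.
apply/mnm_lepP => l; rewrite mnm1E; case: eqP => [<-|_] //.
Qed.

Lemma E_expand b f : E b f = \sum_(m <- msupp f) (f@_m * pairing b m) *: 'X_[m].
Proof.
rewrite {1}(mpolyE f) (big_morph (E b) (E_D b) (E_0 b)).
by apply: eq_bigr => m _; rewrite E_Z E_X scalerA.
Qed.

Lemma E_comm b g f : E b (E g f) = E g (E b f).
Proof.
rewrite (E_expand g f) (E_expand b f) !(big_morph _ (E_D _) (E_0 _)).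
apply: eq_bigr => m _; rewrite !E_Z !E_X !scalerA; congr (_ *: _).
by rewrite -!mulrA [pairing g m * _]mulrC.
Qed.

Lemma E_lin x y b g f : E (x *: b + y *: g) f = x *: E b f + y *: E g f.
Proof.
rewrite /E !scaler_sumr -big_split /=; apply: eq_bigr => j _.
by rewrite !mxE scalerDl !scalerA.
Qed.

Lemma E_XM b q f : E b ('X_[q] * f) = pairing b q *: ('X_[q] * f) + 'X_[q] * E b f.
Proof. by rewrite E_M E_X scalerAl. Qed.

Lemma bracketE p q b g f :
  lie_bracket (Delta p b) (Delta q g) f =
  Delta (p + q)%MM (pairing b q *: g - pairing g p *: b) f.
Proof.
rewrite /lie_bracket !DeltaE !E_XM -scaleNr E_lin E_comm mpolyXD.
rewrite scaleNr -!mul_mpolyC.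
ring.
Qed.

End Calc.

Section Iter.
Variables (K : fieldType) (n : nat).

Fixpoint itb (D A : op K n) (m : nat) : op K n :=
  if m is m'.+1 then lie_bracket D (itb D A m') else A.

Variables (pw q : 'X_{1..n}) (bw gam : 'rV[K]_n).
Definition dd (m : nat) : 'X_{1..n} := (q + pw *+ m)%MM.
Definition cc (k : nat) : K := pairing bw (dd k).
Definition PP (m : nat) : K := \prod_(k < m) cc k.
Definition BB (m : nat) : K :=
  if m is m'.+1 then - (m%:R * pairing gam pw * PP m') else 0.

Lemma dd_S m : dd m.+1 = (pw + dd m)%MM.
Proof. by rewrite /dd mulmS addmA [(q + pw)%MM]addmC -addmA. Qed.

Lemma PP_S m : PP m.+1 = PP m * cc m.
Proof. by rewrite /PP big_ord_recr. Qed.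

Lemma itbE (A : op K n) (hA : forall f, A f = Delta q gam f) m f :
  itb (Delta pw bw) A m f = Delta (dd m) (PP m *: gam + BB m *: bw) f.
Proof.
elim: m f => [|m IH] f.
  by rewrite /= hA /PP big_ord0 scale1r /dd mulm0n addm0 scale0r addr0.
have -> : itb (Delta pw bw) A m.+1 f =
   lie_bracket (Delta pw bw) (Delta (dd m) (PP m *: gam + BB m *: bw)) f.
  by rewrite /= /lie_bracket !IH.
rewrite bracketE dd_S; congr (Delta _ _ f).
rewrite pairing_lin scalerDr !scalerA -addrA -scalerBl.
congr (_ *: _ + _ *: _); first by rewrite PP_S mulrC.
case: m {IH} => [|m].
  by rewrite /= /PP big_ord0; ring.
rewrite /BB PP_S /cc dd_S pairingD -/(cc m).
rewrite -[(m.+2)%:R]natr1 -[(m.+1)%:R]natr1.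
ring.
Qed.

End Iter.

Section Main.
Variables (K : fieldType) (n k : nat)
  (p : 'I_k -> 'X_{1..n}) (beta : 'I_k -> 'rV[K]_n).
Hypotheses (hchar : [pchar K] =i pred0) (hp : forall i, p i != 0%MM)
  (hb : forall i, beta i != 0).

Let Dg := fun i => Delta (p i) (beta i).

Lemma itb_in D A m : in_lie_gen Dg D -> in_lie_gen Dg A -> in_lie_gen Dg (itb D A m).
Proof. by move=> hD hA; elim: m => [|m IH] //=; apply: lie_br. Qed.

Lemma pairingZ (s : K) (b : 'rV[K]_n) (m : 'X_{1..n}) : pairing (s *: b) m = s * pairing b m.
Proof. by rewrite /pairing mulr_sumr; apply: eq_bigr => l _; rewrite mxE mulrA. Qed.

Lemma mdeg_pos i : (0 < mdeg (p i))%N.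
Proof. by rewrite lt0n mdeg_eq0 hp. Qed.

Lemma grow (S : pred 'I_k)
  (hS : forall v, S v -> exists w, S w /\ Gamma_edge p beta v w) (Bnd : nat) :
  forall r v q s A, S v -> s != 0 -> in_lie_gen Dg A ->
  (forall f, A f = Delta q (s *: beta v) f) -> (Bnd <= mdeg q + r)%N ->
  exists A' q' g', [/\ in_lie_gen Dg A', (forall f, A' f = Delta q' g' f),
                      g' != 0 & (Bnd <= mdeg q')%N].
Proof.
elim=> [|r IH] v q s A Sv s0 LA hA hB.
  exists A, q, (s *: beta v); split => //; last by rewrite addn0 in hB.
  by rewrite scaler_eq0 negb_or s0 hb.
case: (leqP Bnd (mdeg q)) => hq.
  exists A, q, (s *: beta v); split => //.
  by rewrite scaler_eq0 negb_or s0 hb.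
have [w [Sw [npr hpair]]] := hS v Sv.
set gam := s *: beta v.
have hg : pairing gam (p w) != 0 by rewrite pairingZ; apply: mulf_neq0 => //; apply/eqP.
have indep : forall x y, x != 0 -> x *: gam + y *: beta w != 0.
  move=> x y x0; apply/eqP => h; apply: npr.
  move/eqP: h; rewrite addr_eq0 scalerA => /eqP h.
  exists ((x * s)^-1 * - y).
  by rewrite -scalerA scaleNr -h scalerK // mulf_neq0.
have Lw : in_lie_gen Dg (Delta (p w) (beta w)) by exact: (lie_gen Dg w).
case: (boolP [exists k0 : 'I_Bnd, cc (p w) q (beta w) k0 == 0]).
  move/existsP => [k0 hk0].
  have ex : exists m, cc (p w) q (beta w) m == 0 by exists (val k0).
  case: (ex_minnP ex) => m0 hm0 hmin.
  have P0 : PP (p w) q (beta w) m0 != 0.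
    apply/prodf_neq0 => i _; apply/negP => /hmin; rewrite leqNgt ltn_ord //.
  pose A' := itb (Delta (p w) (beta w)) A m0.+1.
  have hA' : forall f, A' f = Delta (dd (p w) q m0.+1)
        (BB (p w) q (beta w) gam m0.+1 *: beta w) f.
    move=> f; rewrite /A' (itbE (p w) (beta w) hA) PP_S (eqP hm0) mulr0 scale0r add0r //.
  apply: (IH w _ _ A' Sw _ (itb_in _ Lw LA) hA').
    rewrite /BB oppr_eq0 !mulf_neq0 //.
    by move/pcharf0P: hchar => ->.
  rewrite /dd mdegD mdegMn.
  have h1 := mdeg_pos w.
  have h2 : (mdeg (p w) <= mdeg (p w) * m0.+1)%N by rewrite leq_pmulr.
  lia.
rewrite negb_exists => /forallP hnz.
exists (itb (Delta (p w) (beta w)) A Bnd), (dd (p w) q Bnd),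
  (PP (p w) q (beta w) Bnd *: gam + BB (p w) q (beta w) gam Bnd *: beta w).
split.
- exact: itb_in.
- by move=> f; rewrite (itbE (p w) (beta w) hA).
- by apply: indep; apply/prodf_neq0 => i _; apply: hnz.
- rewrite /dd mdegD mdegMn; apply: leq_trans (leq_addl _ _).
  by rewrite -[X in (X <= _)%N]mul1n leq_mul2r mdeg_pos orbT.
Qed.

Lemma no_high : lie_gen_fin_dim Dg -> exists Bnd, forall A q g,
  in_lie_gen Dg A -> (forall f, A f = Delta q g f) -> g != 0 -> (mdeg q < Bnd)%N.
Proof.
case=> s hs.
exists (\sum_(l < n) \sum_(i < size s) msize (nth (fun g => g) s i 'X_l)).+1.
move=> A q g LA hA g0.
have [l hl] : exists l, g 0 l != 0.
  case: (pickP (fun l => g 0 l != 0)) => [l hl|h]; first by exists l.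
  by case/eqP: g0; apply/rowP => l; rewrite mxE; move: (h l) => /negbFE/eqP.
rewrite ltnS leqNgt; apply/negP => hlt.
have [c hc] := hs A LA.
have := hc 'X_l; rewrite hA DeltaE E_X.
move/(congr1 (mcoeff (q + U_(l))%MM)).
rewrite -scalerAr mcoeffZ -mpolyXD mcoeffX eqxx mulr1.
rewrite (big_morph _ (mcoeffD (q + U_(l))%MM) (mcoeff0 _ (q + U_(l))%MM)) big1 => [|i _].
  have -> : pairing g U_(l) = g 0 l.
    rewrite /pairing (bigD1 l) //= mnm1E eqxx mulr1 big1 ?addr0 // => j hj.
    by rewrite mnm1E eq_sym (negbTE hj) mulr0.
  by move/eqP: hl.
rewrite mcoeffZ; apply/eqP; rewrite mulf_eq0; apply/orP; right.
rewrite mcoeff_eq0 msize_mdeg_ge //.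
set T := (\sum_(l < n) _)%N in hlt.
have ht : (msize (nth (fun g => g) s i 'X_l) <= T)%N.
  by rewrite /T (bigD1 l) //= (bigD1 i) //= -addnA leq_addr.
rewrite mdegD mdeg1; apply: (leq_trans ht); exact: leq_trans (ltnW hlt) (leq_addr _ _).
Qed.

End Main.

Unset Implicit Arguments.

Theorem lemma7 (K : fieldType) (n k : nat)
  (p : 'I_k -> 'X_{1..n}) (beta : 'I_k -> 'rV[K]_n) :
  [pchar K] =i pred0 ->
  (forall i, p i != 0%MM) ->
  (forall i, beta i != 0) ->
  lie_gen_fin_dim (fun i => Delta (p i) (beta i)) ->
  ~ has_oriented_cycle p beta.
Proof.
move=> hchar hp hb hfd [i0 [c [cne hlast hedge]]].
have [Bnd hBnd] := no_high hfd.
have hS : forall v, v \in c -> exists w, w \in c /\ Gamma_edge p beta v w.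
  move=> v vc.
  have ht : (index v c < size c)%N by rewrite index_mem.
  case: (ltnP (index v c).+1 (size c)) => ht1.
    exists (nth i0 c (index v c).+1); split; first exact: mem_nth.
    by have := hedge _ ht1; rewrite /= nth_index.
  have hv : v = i0.
    have e : index v c = (size c).-1.
      lia.
    by rewrite -hlast -nth_last -e nth_index.
  have c0 : (0 < size c)%N by case: c cne {hlast hedge ht ht1 vc} => //.
  exists (nth i0 c 0); split; first exact: mem_nth.
  by have := hedge _ c0; rewrite /= hv.
have c0 : (0 < size c)%N by case: c cne {hlast hedge hS} => //.
have v0c : nth i0 c 0 \in c by exact: mem_nth.
have h1 : forall f, Delta (p (nth i0 c 0)) (beta (nth i0 c 0)) f =
    Delta (p (nth i0 c 0)) (1 *: beta (nth i0 c 0)) f by move=> f; rewrite scale1r.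
have [A' [q' [g' [LA' hA' g0 hq']]]] :=
  @grow K n k p beta hchar hp hb (fun v => v \in c) hS Bnd Bnd (nth i0 c 0)
    (p (nth i0 c 0)) 1 _ v0c (oner_neq0 _) (lie_gen _ (nth i0 c 0))
    h1 (leq_addl _ _).
by have := hBnd _ _ _ LA' hA' g0; rewrite ltnNge hq'.
Qed.
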